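(* Let $M,N$ be hyperbolic surfaces with $W_M=W_N$, and let $l\in L_0$. Then $$\bigl|\, l\,P_{\mathrm{odd}} \cap (L_0\setminus\{l\})\,\mathbb{N}^+ \bigr| \le |L_0|-1,$$ i.e. at most $|L_0|-1$ of the numbers $pl$, $p$ an odd prime, are positive integer multiples of an element of $L_0$ other than $l$.
   Context: A hyperbolic surface is a compact Riemannian 2-manifold without boundary of constant curvature $-1$, possibly non-orientable or disconnected; geodesics are oriented closed geodesics. For a geodesic $\gamma$ with length $l(\gamma)$ and imprimitivity index $\nu(\gamma)$, set $\mathrm{wt}(\gamma)=1/\nu(\gamma)$ if $\gamma$ is orientation-preserving and $\mathrm{wt}(\gamma)=\frac1{\nu(\gamma)}\tanh(l(\gamma)/2)$ if orientation-reversing; $W_M(l)=\sum_{l(\gamma)=l}\mathrm{wt}(\gamma)$. Let $\alpha_M(l)$ (resp. $\beta_M(l)$) be the number of primitive orientation-preserving (resp. orientation-reversing) geodesics of $M$ of length exactly $l$; $a(l)=\alpha_M(l)-\alpha_N(l)$, $b(l)=\beta_N(l)-\beta_M(l)$; $L=\{l>0: a(l)\neq0\text{ or }b(l)\neq0\}$; $L_0=\{l\in L: l\text{ is not of the form } kl' \text{ with } l'\in L,\ l'\neq l,\ k\in\mathbb{N}^+\}$. $P_{\mathrm{odd}}$ is the set of odd primes, $lP_{\mathrm{odd}}=\{lp: p\in P_{\mathrm{odd}}\}$, and $(L_0\setminus\{l\})\mathbb{N}^+=\{kl' : l'\in L_0\setminus\{l\},\ k\in\mathbb{N}^+\}$.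 *)

(* Defs.v *)
From Stdlib Require Import Reals Lra Lia ZArith Znumtheory List.
From Coquelicot Require Import Coquelicot.
Open Scope R_scope.

(* A closed hyperbolic surface M enters the statement only through its
   primitive closed geodesics, recorded by their counting functions:
     alpha M l = number of primitive orientation-preserving geodesics of length l,
     beta  M l = number of primitive orientation-reversing geodesics of length l. *)
Record surface := {
  alpha : R -> nat;
  beta : R -> nat;
  spec_pos : forall l, (alpha l + beta l <> 0)%nat -> 0 < l;
  spec_discrete : forall T, exists s : list R,
      forall l, (alpha l + beta l <> 0)%nat -> l <= T -> In l s
}.

(* Contribution to W_M(l) of the geodesics delta^k (k >= 1, nu = k) with delta
   primitive of length l/k: delta^k is orientation-reversing iff delta is and
   k is odd; its weight is 1/k, times tanh(l/2) if orientation-reversing. *)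
Definition W_term (M : surface) (l : R) (k : nat) : R :=
  let x := l / INR k in
  (INR (alpha M x) + INR (beta M x) * (if Nat.odd k then tanh (l / 2) else 1))
  / INR k.

(* W_M(l) = sum over all closed geodesics gamma of length l of wt(gamma)
   (a finite sum, since only finitely many k give a nonzero term). *)
Definition W (M : surface) (l : R) : R :=
  Series (fun n => W_term M l (S n)).

Definition a_diff (M N : surface) (l : R) : Z :=
  (Z.of_nat (alpha M l) - Z.of_nat (alpha N l))%Z.
Definition b_diff (M N : surface) (l : R) : Z :=
  (Z.of_nat (beta N l) - Z.of_nat (beta M l))%Z.

Definition Lset (M N : surface) (l : R) : Prop :=
  0 < l /\ (a_diff M N l <> 0%Z \/ b_diff M N l <> 0%Z).

Definition L0set (M N : surface) (l : R) : Prop :=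
  Lset M N l /\
  ~ (exists l' (k : nat), Lset M N l' /\ l' <> l /\ (1 <= k)%nat /\ l = INR k * l').

Definition odd_prime (p : nat) : Prop := prime (Z.of_nat p) /\ Nat.odd p = true.

Definition bad_set (M N : surface) (l : R) (x : R) : Prop :=
  (exists p : nat, odd_prime p /\ x = l * INR p) /\
  (exists l' (k : nat), L0set M N l' /\ l' <> l /\ (1 <= k)%nat /\ x = INR k * l').

(* Main.v *)
Require Import Defs.
From Stdlib Require Import Reals List.
From Coquelicot Require Import Coquelicot.
From Stdlib Require Import Lra Lia ZArith Znumtheory.
Open Scope R_scope.

Lemma inj_len (R0 : R -> R -> Prop) :
  forall s : list R, NoDup s ->
  forall t : list R,
  (forall x, In x s -> exists y, In y t /\ R0 x y) ->
  (forall x x' y, R0 x y -> R0 x' y -> x = x') ->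
  (length s <= length t)%nat.
Proof.
  intros s Hs. induction Hs as [|x s Hx Hs IH]; intros t Hm Hu; simpl; [lia|].
  destruct (Hm x (or_introl eq_refl)) as [y [Hy Hr]].
  assert (length s <= length (remove Req_EM_T y t))%nat.
  { apply IH; [|exact Hu]. intros x' Hx'.
    destruct (Hm x' (or_intror Hx')) as [y' [Hy' Hr']].
    exists y'. split; [|exact Hr'].
    apply in_in_remove; [|exact Hy'].
    intro E; subst y'. apply Hx. rewrite (Hu x' x y Hr' Hr) in Hx'. exact Hx'. }
  pose proof (remove_length_lt Req_EM_T t y Hy). lia.
Qed.

Theorem lemma2 (M N : surface)
  (HW : forall t : R, W M t = W N t)
  (l : R) (Hl : L0set M N l) :
  forall s0 : list R, NoDup s0 -> (forall x, In x s0 <-> L0set M N x) ->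
  forall s : list R, NoDup s -> (forall x, In x s -> bad_set M N l x) ->
  (length s <= length s0 - 1)%nat.
Proof.
  intros s0 Hs0 Hin s Hs Hbad.
  assert (Hlpos : 0 < l) by (destruct Hl as [[H _] _]; exact H).
  assert (Hl0 : In l s0) by (apply Hin; exact Hl).
  pose (R0 := fun x l' => exists p k : nat, odd_prime p /\ x = l * INR p /\
       L0set M N l' /\ l' <> l /\ (1 <= k)%nat /\ x = INR k * l').
  assert (Hle : (length s <= length (remove Req_EM_T l s0))%nat).
  { apply (inj_len R0); auto.
    - intros x Hx. destruct (Hbad x Hx) as [[p [Hp E1]] [l' [k [H1 [H2 [H3 E2]]]]]].
      exists l'. split.
      + apply in_in_remove; auto. apply Hin; exact H1.
      + exists p, k. exact (conj Hp (conj E1 (conj H1 (conj H2 (conj H3 E2))))).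
    - intros z z' y H1 H2. destruct H1 as [p [k [Hp [E1 [Hy [Hyl [Hk E2]]]]]]]. destruct H2 as
      [p' [k' [Hp' [E1' [_ [_ [Hk' E2']]]]]]].
      assert (Heq : (p * k' = p' * k)%nat).
      { apply INR_eq. rewrite !mult_INR.
        apply Rmult_eq_reg_l with l; [|lra].
        replace (l * (INR p * INR k')) with ((l * INR p) * INR k') by ring.
        replace (l * (INR p' * INR k)) with ((l * INR p') * INR k) by ring.
        rewrite <- E1, <- E1', E2, E2'. ring. }
      destruct (Nat.eq_dec p p') as [<-|Hne]; [congruence|].
      exfalso. destruct Hp as [Pp _]. destruct Hp' as [Pp' _].
      assert (Hd : (Z.of_nat p | Z.of_nat p' * Z.of_nat k)%Z).
      { exists (Z.of_nat k'). rewrite <- !Nat2Z.inj_mul. f_equal. lia. }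
      destruct (prime_mult _ Pp _ _ Hd) as [Hd1|Hd1].
      + apply Hne. apply Nat2Z.inj. apply prime_div_prime; auto.
      + destruct Hd1 as [m Hm].
        assert (Hp1 : (1 < Z.of_nat p)%Z) by (destruct Pp; auto).
        assert (Hm0 : (0 <= m)%Z) by nia.
        pose (mn := Z.to_nat m).
        assert (Hkm : k = (mn * p)%nat) by (unfold mn; lia).
        apply (proj2 Hl). exists y, mn. split; [exact (proj1 Hy)|]. split; [exact Hyl|]. split.
        * lia.
        * assert (INR p > 0) by (apply lt_0_INR; lia).
          subst k. rewrite mult_INR in E2.
          apply Rmult_eq_reg_r with (INR p); [|lra].
          rewrite <- E1 at 1. rewrite E2. ring. }
  pose proof (remove_length_lt Req_EM_T s0 l Hl0). lia.
Qed.
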